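(* Let $(\mathcal A,\mathcal T,(-))$ be a meta-tangible $\mathcal T$-group module triple, with identity $\mathbb 1$, and put $e=\mathbb 1(-)\mathbb 1$, $e'=e+\mathbb 1$. Then one of the following holds: (i) $(\mathcal A,\mathcal T,(-))$ is $(-)$-bipotent; (ii) $e'=\mathbb 1$, and moreover either (a) $(-)$ is of the first kind and $\mathcal A$ has characteristic $2$ (i.e. $\mathbf 3=\mathbb 1$), in which case $\mathcal A$ has height at most $2$; or (b) $(-)$ is of the second kind, and either $\mathcal A$ has finite (positive) characteristic or the elements $\mathbf m$ and $(-)\mathbf m$, $m\in\mathbb N$, are pairwise distinct.
   Context: $(\mathcal A,+,\mathbb 0)$ commutative monoid, $\mathcal T\subseteq\mathcal A\setminus\{\mathbb 0\}$. A negation map is $(-):\mathcal A\to\mathcal A$ with $(-)(b_1+b_2)=(-)b_1+(-)b_2$, $(-)((-)b)=b$, $(-)\mathbb 0=\mathbb 0$, $(-)\mathcal T\subseteq\mathcal T$. Write $b(-)c:=b+((-)c)$, $b^\circ:=b(-)b$, $\mathcal A^\circ=\{b^\circ:b\in\mathcal A\}$. A $\mathcal T$-triple $(\mathcal A,\mathcal T,(-))$: such data with an action $\mathcal T\times\mathcal A\to\mathcal A$ satisfying $a(b_1+b_2)=ab_1+ab_2$, $a\mathbb 0=\mathbb 0$, $(-)(ab)=((-)a)b=a((-)b)$, with $\mathcal T\cap\mathcal A^\circ=\emptyset$ and every element of $\mathcal A$ a finite sum of elements of $\mathcal T$. It is a $\mathcal T$-group module triple if moreover $\mathcal T$ is a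 group with identity $\mathbb 1$ whose multiplication is the restriction of the action, $\mathbb 1b=b$ and $(a_1a_2)b=a_1(a_2b)$. Meta-tangible: $a+b\in\mathcal T$ for all $a,b\in\mathcal T$ with $b\neq(-)a$. $(-)$-bipotent: $a+b\in\{a,b\}$ for all $a,b\in\mathcal T$ with $b\neq(-)a$. $(-)$ is of the first kind if $(-)a=a$ for all $a\in\mathcal T$, of the second kind if $(-)a\neq a$ for all $a\in\mathcal T$. $\mathbf m:=\mathbb 1+\cdots+\mathbb 1$ ($m$ summands). $\mathcal A$ has characteristic $k\ge1$ if $k$ is minimal with $(k+1)b=b$ for all $b\in\mathcal A$ (here $nb$ is the $n$-fold sum), and characteristic $0$ if no such $k$ exists. Height of $c$: least $t$ with $c=\sum_{i=1}^ta_i$, $a_i\in\mathcal T$; height of $\mathcal A$: supremum over its elements. *)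

(* Defs.v *)
From Stdlib Require Import List Arith.
Import ListNotations.

Section Triples.
Variables (A : Type) (add : A -> A -> A) (zero : A)
  (T : A -> Prop) (neg : A -> A) (act : A -> A -> A) (one : A).

Definition lsum (l : list A) : A := fold_right add zero l.

Fixpoint nsum (n : nat) (b : A) : A :=
  match n with 0 => zero | S k => add b (nsum k b) end.

Definition minus (b c : A) : A := add b (neg c).

(* A T-triple (A,T,(-)) with the action T x A -> A given by act
   (values of act with non-tangible first argument are irrelevant). *)
Definition is_T_triple : Prop :=
  (forall x y z, add x (add y z) = add (add x y) z) /\
  (forall x y, add x y = add y x) /\
  (forall x, add zero x = x) /\
  (forall a, T a -> a <> zero) /\
  (forall b1 b2, neg (add b1 b2) = add (neg b1) (neg b2)) /\
  (forall b, neg (neg b) = b) /\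
  neg zero = zero /\
  (forall a, T a -> T (neg a)) /\
  (forall a b1 b2, T a -> act a (add b1 b2) = add (act a b1) (act a b2)) /\
  (forall a, T a -> act a zero = zero) /\
  (forall a b, T a -> neg (act a b) = act (neg a) b /\ neg (act a b) = act a (neg b)) /\
  (forall b, ~ T (minus b b)) /\
  (forall c, exists l, Forall T l /\ c = lsum l).

(* T-group module triple: T is a group with identity one whose
   multiplication is the restriction of the action. *)
Definition is_T_group_module_triple : Prop :=
  is_T_triple /\
  T one /\
  (forall a1 a2, T a1 -> T a2 -> T (act a1 a2)) /\
  (forall a, T a -> act a one = a) /\
  (forall a, T a -> exists a', T a' /\ act a a' = one /\ act a' a = one) /\
  (forall b, act one b = b) /\
  (forall a1 a2 b, T a1 -> T a2 -> act (act a1 a2) b = act a1 (act a2 b)).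

Definition meta_tangible : Prop :=
  forall a b, T a -> T b -> b <> neg a -> T (add a b).

Definition neg_bipotent : Prop :=
  forall a b, T a -> T b -> b <> neg a -> add a b = a \/ add a b = b.

Definition first_kind : Prop := forall a, T a -> neg a = a.
Definition second_kind : Prop := forall a, T a -> neg a <> a.

Definition has_char (k : nat) : Prop :=
  1 <= k /\ (forall b, nsum (S k) b = b) /\
  (forall j, 1 <= j -> j < k -> ~ (forall b, nsum (S j) b = b)).

Definition sum_of_tangibles (c : A) (t : nat) : Prop :=
  exists l, length l = t /\ Forall T l /\ c = lsum l.

Definition height (c : A) (t : nat) : Prop :=
  sum_of_tangibles c t /\ forall t', sum_of_tangibles c t' -> t <= t'.

Definition height_le (h : nat) : Prop :=
  forall c t, height c t -> t <= h.

Definition signed (s : bool) (x : A) : A := if s then x else neg x.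
Definition units_pairwise_distinct : Prop :=
  forall m n s s', 1 <= m -> 1 <= n ->
    signed s (nsum m one) = signed s' (nsum n one) -> m = n /\ s = s'.

End Triples.

(* Main.v *)
Require Import Defs.
From Stdlib Require Import List Arith Lia Classical.

Lemma nsum_add_l (A : Type) (add : A -> A -> A) (zero : A)
  (Hassoc : forall x y z, add x (add y z) = add (add x y) z)
  (Hcomm : forall x y, add x y = add y x)
  (H0l : forall x, add zero x = x) :
  forall n x y, nsum A add zero n (add x y) = add (nsum A add zero n x) (nsum A add zero n y).
Proof.
  induction n as [|n IH]; intros x y; simpl.
  - symmetry; apply H0l.
  - rewrite IH.
    rewrite <- !Hassoc. f_equal.
    rewrite (Hcomm y (add _ _)). rewrite <- Hassoc. f_equal. apply Hcomm.
Qed.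

Lemma nsum_zero_l (A : Type) (add : A -> A -> A) (zero : A)
  (H0l : forall x, add zero x = x) : forall n, nsum A add zero n zero = zero.
Proof. induction n; simpl; auto. rewrite IHn; auto. Qed.

Lemma nsum_act_l (A : Type) (add : A -> A -> A) (zero : A) (act : A -> A -> A) (a : A)
  (Hd : forall b1 b2, act a (add b1 b2) = add (act a b1) (act a b2))
  (H0 : act a zero = zero) :
  forall n y, act a (nsum A add zero n y) = nsum A add zero n (act a y).
Proof. induction n; intros y; simpl; auto. rewrite Hd, IHn; auto. Qed.

Lemma min_exists (P : nat -> Prop) :
  (exists k, 1 <= k /\ P k) -> exists k, 1 <= k /\ P k /\ forall j, 1 <= j -> j < k -> ~ P j.
Proof.
  intros [k Hk]. revert Hk. induction k as [k IH] using lt_wf_ind. intros [H1 Hk].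
  destruct (classic (exists j, 1 <= j /\ j < k /\ P j)) as [[j [Hj1 [Hj2 Hj3]]]|Hn].
  - apply (IH j Hj2). auto.
  - exists k. split; [auto|split; [auto|]]. intros j Hj1 Hj2 Hj3. apply Hn. eauto.
Qed.

Theorem theorem7p21 (A : Type) (add : A -> A -> A) (zero : A)
  (T : A -> Prop) (neg : A -> A) (act : A -> A -> A) (one : A)
  (Htriple : is_T_group_module_triple A add zero T neg act one)
  (Hmt : meta_tangible A add T neg) :
  let e := minus A add neg one one in
  let e' := add e one in
  neg_bipotent A add T neg \/
  (e' = one /\
   ((first_kind A T neg /\ has_char A add zero 2 /\
     height_le A add zero T 2) \/
    (second_kind A T neg /\
     ((exists k, has_char A add zero k) \/
      units_pairwise_distinct A add zero neg one)))).
Proof.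
  destruct Htriple as [[Hassoc [Hcomm [H0l [HT0 [Hnadd [Hnn [Hn0 [HTn [Hdist [Hact0 [Hactn [Hcirc Hgen]]]]]]]]]]]] [HT1 [HTmul [Hact1r [Hinv [Hact1l Hactassoc]]]]]].
  intros e e'. unfold minus in *.
  assert (Hr0 : forall x, add x zero = x) by (intro x; rewrite Hcomm; auto).
  assert (Hchar_all : forall p, nsum A add zero p one = one -> forall b, nsum A add zero p b = b).
  { intros p Hp b. destruct (Hgen b) as [l [Hl ->]]. induction Hl as [|x l Hx Hl IH]; simpl.
    - apply nsum_zero_l; auto.
    - rewrite (nsum_add_l A add zero Hassoc Hcomm H0l), IH. f_equal.
      rewrite <- (Hact1r x Hx) at 2. rewrite <- Hp.
      rewrite (nsum_act_l A add zero act x (fun b1 b2 => Hdist x b1 b2 Hx) (Hact0 x Hx) p one).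
      rewrite Hact1r; auto. }
  destruct (classic (neg_bipotent A add T neg)) as [Hb|Hnb]; [left; exact Hb|right].
  assert (Hw : exists a b, T a /\ T b /\ b <> neg a /\ add a b <> a /\ add a b <> b).
  { apply NNPP. intro Hn. apply Hnb. intros a b Ha Hb Hab.
    destruct (classic (add a b = a)); [left; auto|].
    destruct (classic (add a b = b)); [right; auto|].
    exfalso; apply Hn; exists a, b; auto. }
  destruct Hw as [a [b [Ha [Hb [Hab [Hda Hdb]]]]]].
  assert (Hd : T (add a b)) by (apply Hmt; auto).
  destruct (classic (neg one = one)) as [Hn1|Hn1].
  -
    assert (Hfk : forall x, T x -> neg x = x).
    { intros x Hx. rewrite <- (Hact1r x Hx). destruct (Hactn x one Hx) as [_ ->]. rewrite Hn1; auto. }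
    assert (Hdd : ~ T (add (add a b) (add a b))).
    { intro H. apply (Hcirc (add a b)). rewrite Hfk; auto. }
    assert (Hf : add (add (add a b) a) b = add (add a b) (add a b)) by (rewrite Hassoc; auto).
    assert (Hg : add (add (add a b) b) a = add (add a b) (add a b))
      by (rewrite <- Hassoc, (Hcomm b a); auto).
    assert (HfT : T (add (add a b) a)).
    { apply Hmt; auto. rewrite (Hfk _ Hd). intro H; apply Hda; auto. }
    assert (HgT : T (add (add a b) b)).
    { apply Hmt; auto. rewrite (Hfk _ Hd). intro H; apply Hdb; auto. }
    assert (Hf' : add (add a b) a = b).
    { apply NNPP; intro H. apply Hdd. rewrite <- Hf. apply Hmt; auto.
      rewrite (Hfk _ HfT). auto. }
    assert (Hg' : add (add a b) b = a).
    { apply NNPP; intro H. apply Hdd. rewrite <- Hg. apply Hmt; auto.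
      rewrite (Hfk _ HgT). auto. }
    assert (H2 : add a a = add b b).
    { rewrite Hf' in Hf. rewrite Hg' in Hg. congruence. }
    assert (H3a : nsum A add zero 3 a = a).
    { simpl. rewrite Hr0, H2, Hassoc, Hg'. auto. }
    assert (H3 : nsum A add zero 3 one = one).
    { destruct (Hinv a Ha) as [a' [Ha' [_ Ha'a]]].
      rewrite <- Ha'a. rewrite <- (nsum_act_l A add zero act a' (fun b1 b2 => Hdist a' b1 b2 Ha') (Hact0 a' Ha') 3 a).
      rewrite H3a. auto. }
    split.
    { unfold e', e. rewrite Hn1. rewrite <- H3 at 4. simpl. rewrite Hr0, Hassoc. auto. }
    left. split; [exact Hfk|]. split.
    { split; [lia|]. split; [apply Hchar_all; exact H3|].
      intros j Hj1 Hj2 Hall. assert (j = 1) by lia. subst j.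
      apply (Hcirc one). rewrite Hn1. specialize (Hall one). simpl in Hall. rewrite Hr0 in Hall.
      rewrite Hall. auto. }
    assert (Hred : forall l, Forall T l -> exists l', length l' <= 2 /\ Forall T l' /\ lsum A add zero l' = lsum A add zero l).
    { induction 1 as [|x l Hx Hl IH].
      - exists nil. simpl. auto.
      - destruct IH as [l' [Hlen [Hl' Hs]]].
        destruct l' as [|y [|z [|w r]]]; simpl in Hlen.
        + exists (x :: nil). unfold lsum in *. simpl in *. rewrite <- Hs. auto.
        + exists (x :: y :: nil). unfold lsum in *. simpl in *. rewrite <- Hs. auto.
        + inversion Hl' as [|? ? Hy Hl'']. inversion Hl'' as [|? ? Hz _]. subst.
          unfold lsum in *. simpl in *. rewrite <- Hs.
          destruct (classic (y = x)) as [Hxy|Hxy].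
          * subst y. destruct (classic (z = x)) as [Hxz|Hxz].
            -- subst z. exists (x :: nil). simpl. split; [lia|]. split; auto.
               pose proof (Hchar_all 3 H3 x) as Hx3. simpl in Hx3. rewrite Hx3. auto.
            -- exists (x :: add x z :: nil). simpl. split; [lia|]. split.
               { constructor; auto. constructor; auto. apply Hmt; auto. rewrite Hfk; auto. }
               rewrite !Hr0. auto.
          * exists (add x y :: z :: nil). simpl. split; [lia|]. split.
            { constructor; auto. apply Hmt; auto. rewrite Hfk; auto. }
            rewrite !Hr0, Hassoc. auto.
        + lia. }
    intros c t [_ Hmin]. destruct (Hgen c) as [l [Hl Hc]].
    destruct (Hred l Hl) as [l' [Hlen [Hl' Hs]]].
    assert (t <= length l') by (apply Hmin; exists l'; split; [auto|split; [auto|congruence]]).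
    lia.
  -
    assert (Hsk : forall x, T x -> neg x <> x).
    { intros x Hx Hnx. destruct (Hinv x Hx) as [x' [Hx' [_ Hx'x]]]. apply Hn1.
      rewrite <- Hx'x. destruct (Hactn x' x Hx') as [_ ->]. rewrite Hnx. auto. }
    assert (Hx : add (add a b) (neg a) = b).
    { apply NNPP; intro H. apply (Hcirc (add a b)). rewrite Hnadd, Hassoc.
      apply Hmt; auto. apply Hmt; auto. intro Hq. apply Hda. rewrite <- (Hnn (add a b)), <- Hq, Hnn. auto.
      intro Hq. apply H. rewrite <- (Hnn (add (add a b) (neg a))), <- Hq, Hnn. auto. }
    assert (H21 : add one one <> one).
    { intro H11. assert (Haa : add a a = a).
      { rewrite <- (Hact1r a Ha) at 3. rewrite <- H11, Hdist, Hact1r; auto. }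
      apply Hdb. rewrite <- Hx at 1. rewrite Hassoc, Hassoc, Haa. exact Hx. }
    assert (HT2 : T (add one one)) by (apply Hmt; auto).
    assert (He'form : e' = add (add one one) (neg one)).
    { unfold e', e. rewrite <- !Hassoc. f_equal. apply Hcomm. }
    assert (He'T : T e').
    { rewrite He'form. apply Hmt; auto. intro H. apply H21. rewrite <- (Hnn (add one one)), <- H, Hnn. auto. }
    assert (He'1 : e' = one).
    { apply NNPP; intro H. apply (Hcirc (add one one)). rewrite Hnadd.
      rewrite Hassoc, <- He'form. apply Hmt; auto. intro H'. apply H.
      rewrite <- (Hnn e'), <- H', Hnn. auto. }
    assert (He1 : add (add one one) (neg one) = one) by (rewrite <- He'form; auto).
    split; [exact He'1|]. right. split; [exact Hsk|].
    destruct (classic (units_pairwise_distinct A add zero neg one)) as [Hu|Hu]; [right; exact Hu|left].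
    assert (HL : forall j, add (nsum A add zero (S (S j)) one) (neg one) = nsum A add zero (S j) one).
    { induction j as [|j IH].
      - simpl. rewrite Hr0. auto.
      - change (nsum A add zero (S (S (S j))) one) with (add one (nsum A add zero (S (S j)) one)).
        rewrite <- Hassoc, IH. auto. }
    assert (Hp : exists p, 2 <= p /\ nsum A add zero p one = one).
    { assert (D1 : forall m n, m < n -> nsum A add zero (S m) one = nsum A add zero (S n) one ->
                    exists p, 2 <= p /\ nsum A add zero p one = one).
      { induction m as [|m IH]; intros n Hmn Heq.
        - exists (S n). split; [lia|]. simpl in Heq. rewrite Hr0 in Heq. auto.
        - destruct n as [|n]; [lia|]. apply (IH n); [lia|].
          rewrite <- (HL m), <- (HL n), Heq. auto. }
      assert (D2 : forall m n, nsum A add zero (S m) one = neg (nsum A add zero (S n) one) ->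
                    exists p, 2 <= p /\ nsum A add zero p one = one).
      { induction m as [|m IH]; intros n Heq.
        - exists (S (S (S n))). split; [lia|].
          assert (HN : nsum A add zero (S n) one = neg one).
          { rewrite <- (Hnn (nsum A add zero (S n) one)), <- Heq. simpl. rewrite Hr0. auto. }
          change (nsum A add zero (S (S (S n))) one) with (add one (add one (nsum A add zero (S n) one))).
          rewrite HN, Hassoc. auto.
        - apply (IH (S n)). rewrite <- HL, Heq.
          change (nsum A add zero (S (S n)) one) with (add one (nsum A add zero (S n) one)).
          rewrite Hnadd, Hcomm. auto. }
      apply NNPP. intro Hno. apply Hu. intros m n s s' Hm Hn Heq.
      destruct m as [|m]; [lia|]. destruct n as [|n]; [lia|].
      destruct s, s'; unfold signed in Heq; cbv beta iota in Heq.
      - destruct (lt_eq_lt_dec m n) as [[Hlt|Heq']|Hlt].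
        + exfalso. apply Hno. apply (D1 m n Hlt Heq).
        + subst m. auto.
        + exfalso. apply Hno. apply (D1 n m Hlt). auto.
      - exfalso. apply Hno. apply (D2 m n Heq).
      - exfalso. apply Hno. apply (D2 n m). symmetry; exact Heq.
      - destruct (lt_eq_lt_dec m n) as [[Hlt|Heq']|Hlt].
        + exfalso. apply Hno. apply (D1 m n Hlt). rewrite <- (Hnn (nsum _ _ _ (S m) _)), Heq, Hnn. auto.
        + subst m. auto.
        + exfalso. apply Hno. apply (D1 n m Hlt). rewrite <- (Hnn (nsum _ _ _ (S n) _)), <- Heq, Hnn. auto. }
    destruct Hp as [p [Hp2 Hp1]].
    destruct (min_exists (fun k => forall b, nsum A add zero (S k) b = b)) as [k [Hk1 [Hk2 Hk3]]].
    { exists (pred p). split; [lia|]. replace (S (pred p)) with p by lia. apply Hchar_all; auto. }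
    exists k. split; auto.
Qed.
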